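(* Let $\mathbf{A}\in\{0,1\}^{N\times N}$ be the adjacency matrix of a connected simple undirected graph on $N$ nodes whose real sign rank is $3$. For real numbers $k_1,k_1',\dots,k_N,k_N'$ and $x$, let $\mathbf{Z}\in\mathbb{R}^{N\times 3}$ have $i$-th row $(\cos(k_ix)\sin(k_i'x),\ \cos(k_ix)\cos(k_i'x),\ \sin(k_ix))$ and let $\tilde{\mathbf{A}}=\mathbf{Z}\mathbf{Z}^\top$. Then there exist $k_i,k_i'\in\mathbb{R}$ ($i=1,\dots,N$) such that $\operatorname{sign}(A_{ij})=\operatorname{sign}(\tilde A_{ij})$ for all $i\neq j$ (for any fixed nonzero $x$).
   Context: $\operatorname{sign}:\mathbb{R}\to\{+,-\}$ takes the value $-$ on $(-\infty,0]$ and $+$ on $(0,\infty)$, applied entrywise. Graphs have no self-loops and diagonal entries of adjacency matrices are ignored throughout. The real sign rank of a graph with adjacency $\mathbf{A}$ is the minimal $f$ such that there exists $\mathbf{Z}\in\mathbb{R}^{N\times f}$ with $\operatorname{sign}(A_{ij})=\operatorname{sign}((\mathbf{Z}\mathbf{Z}^\top)_{ij})$ for all $i\neq j$. *)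

(* Defs.v *)
From HB Require Import structures.
From mathcomp Require Import all_boot all_order all_algebra.
From mathcomp Require Import all_classical all_reals.
From mathcomp Require Import trigo.
Set Implicit Arguments. Unset Strict Implicit. Unset Printing Implicit Defensive.
Import Order.TTheory GRing.Theory Num.Theory.
Local Open Scope ring_scope.

(* sign : R -> {+,-}; encoded as a bool, true = '+', false = '-'.
   sign x = '+' iff 0 < x, i.e. '-' on (-oo,0] and '+' on (0,oo). *)
Definition sign (R : realType) (x : R) : bool := 0 < x.

Definition adjmx (R : realType) (N : nat) (e : rel 'I_N) : 'M[R]_N :=
  \matrix_(i, j) (e i j)%:R.

Definition sign_realizable (R : realType) (N : nat) (A : 'M[R]_N) (f : nat) :=
  exists Z : 'M[R]_(N, f),
    forall i j : 'I_N, i != j -> sign (A i j) = sign ((Z *m Z^T) i j).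

Definition sign_rank_is (R : realType) (N : nat) (A : 'M[R]_N) (f : nat) :=
  sign_realizable A f /\ (forall g, sign_realizable A g -> (f <= g)%N).

Definition Zmat (R : realType) (N : nat) (k k' : 'I_N -> R) (x : R)
  : 'M[R]_(N, 3) :=
  \matrix_(i, c)
    (if nat_of_ord c == 0%N then cos (k i * x) * sin (k' i * x)
     else if nat_of_ord c == 1%N then cos (k i * x) * cos (k' i * x)
     else sin (k i * x)).

(* Main.v *)
Require Import Defs.
From HB Require Import structures.
From mathcomp Require Import all_boot all_order all_algebra.
From mathcomp Require Import all_classical all_reals.
From mathcomp Require Import trigo.
From mathcomp Require Import ring lra.
Import Order.TTheory GRing.Theory Num.Theory.
Local Open Scope ring_scope.

Lemma sphere (R : realType) (p q r : R) : p^+2 + q^+2 + r^+2 = 1 ->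
  exists a b : R, cos a * sin b = p /\ cos a * cos b = q /\ sin a = r.
Proof.
move=> H.
have rB : -1 <= r <= 1.
  apply/andP; split; nra.
exists (asin r).
have sa : sin (asin r) = r by rewrite asinK // in_itv /=.
rewrite cos_asin // sa.
have E : 1 - r ^+ 2 = p ^+ 2 + q ^+ 2 by lra.
rewrite E.
set c := Num.sqrt _.
have c2 : c ^+ 2 = p ^+ 2 + q ^+ 2 by rewrite sqr_sqrtr //; nra.
have c0 : 0 <= c by rewrite sqrtr_ge0.
have [cz|cnz] := eqVneq c 0.
  have pz : p = 0 by nra.
  have qz : q = 0 by nra.
  by exists 0; rewrite cz pz qz !mul0r.
have cp : 0 < c by rewrite lt0r cnz.
set y := q / c.
have cyq : c * y = q by rewrite /y mulrC divfK.
have yB : -1 <= y <= 1.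
  have : y ^+ 2 <= 1.
    rewrite /y expr_div_n c2 ler_pdivrMr; first by nra.
    by rewrite -c2 exprn_gt0.
  by move=> h; apply/andP; split; nra.
have sy : Num.sqrt (1 - y ^+ 2) = `|p| / c.
  have : 1 - y ^+ 2 = (p / c) ^+ 2.
    rewrite /y !expr_div_n c2; field.
    by rewrite -c2 expf_neq0.
  by move=> ->; rewrite sqrtr_sqr normrM normfV (gtr0_norm cp).
have [pge|plt] := boolP (0 <= p).
  exists (acos y); rewrite acosK ?in_itv //= sin_acos // sy; split => //.
  by rewrite ger0_norm // mulrC divfK.
exists (- acos y); rewrite cosN sinN acosK ?in_itv //= sin_acos // sy; split => //.
rewrite ltr0_norm; last by rewrite ltNge.
by field.
Qed.

Definition c0 : 'I_3 := ord0.
Definition c1 : 'I_3 := lift ord0 (ord0 : 'I_2).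
Definition c2 : 'I_3 := lift ord0 (lift ord0 (ord0 : 'I_1)).

Lemma mul3 (R : realType) N (A B : 'M[R]_(N,3)) i j :
  (A *m B^T) i j = A i c0 * B j c0 + A i c1 * B j c1 + A i c2 * B j c2.
Proof.
by rewrite mxE !big_ord_recl big_ord0 !mxE addr0 addrA.
Qed.

Lemma Zmat_c (R : realType) N (k k' : 'I_N -> R) x i :
  [/\ Zmat k k' x i c0 = cos (k i * x) * sin (k' i * x),
      Zmat k k' x i c1 = cos (k i * x) * cos (k' i * x) &
      Zmat k k' x i c2 = sin (k i * x)].
Proof. by rewrite !mxE. Qed.

Theorem proposition2 (R : realType) (N : nat) (e : rel 'I_N)
  (e_sym : symmetric e) (e_irr : irreflexive e)
  (e_conn : forall i j : 'I_N, connect e i j)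
  (h_rank : sign_rank_is (adjmx R e) 3)
  (x : R) (hx : x != 0) :
  exists k k' : 'I_N -> R,
    forall i j : 'I_N, i != j ->
      sign (adjmx R e i j) = sign ((Zmat k k' x *m (Zmat k k' x)^T) i j).
Proof.
case: h_rank => [[Z hZ] _].
pose s i := Z i c0 ^+ 2 + Z i c1 ^+ 2 + Z i c2 ^+ 2.
pose n i := Num.sqrt (s i).
have s0 i : 0 <= s i by rewrite /s; nra.
have npos i j : i != j -> 0 < n i.
  move=> ij; have /connectP [p pth lst] := e_conn i j.
  case: p pth lst => [|y p] /=; first by move=> _ /eqP; rewrite eq_sym (negbTE ij).
  move=> /andP [eiy _] _.
  have iy : i != y by apply: contraTneq eiy => ->; rewrite e_irr.
  have := hZ i y iy; rewrite /sign /adjmx mxE eiy ltr01 mul3 => /esym h.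
  rewrite /n sqrtr_gt0 lt0r s0 andbT; apply/negP => /eqP hs.
  have z0 : Z i c0 = 0 by rewrite /s in hs; nra.
  have z1 : Z i c1 = 0 by rewrite /s in hs; nra.
  have z2 : Z i c2 = 0 by rewrite /s in hs; nra.
  by move: h; rewrite z0 z1 z2 !mul0r !addr0 ltxx.
have hab : forall i, exists ab : R * R, 0 < n i ->
    [/\ cos ab.1 * sin ab.2 = Z i c0 / n i,
        cos ab.1 * cos ab.2 = Z i c1 / n i & sin ab.1 = Z i c2 / n i].
  move=> i; have [np|] := boolP (0 < n i); last by move=> h; exists (0, 0) => hh; case/negP: h.
  have n2 : n i ^+ 2 = s i by rewrite sqr_sqrtr.
  have hs : (Z i c0 / n i) ^+ 2 + (Z i c1 / n i) ^+ 2 + (Z i c2 / n i) ^+ 2 = 1.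
    by rewrite !expr_div_n -!mulrDl -/(s i) -n2 divff // expf_neq0 // gt_eqF.
  have [a [b [h1 [h2 h3]]]] := @sphere R _ _ _ hs.
  by exists (a, b).
have [f hf] := choice hab.
exists (fun i => (f i).1 / x), (fun i => (f i).2 / x) => i j ij.
have ni := npos i j ij.
have nj : 0 < n j by apply: (npos j i); rewrite eq_sym.
rewrite mul3.
have [a0 a1 a2] := @Zmat_c R N (fun i => (f i).1 / x) (fun i => (f i).2 / x) x i.
have [b0 b1 b2] := @Zmat_c R N (fun i => (f i).1 / x) (fun i => (f i).2 / x) x j.
rewrite a0 a1 a2 b0 b1 b2 !divfK //.
have [h0 h1 h2] := hf i ni.
have [g0 g1 g2] := hf j nj.
rewrite h0 h1 h2 g0 g1 g2 hZ // mul3 /sign.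
have -> : Z i c0 / n i * (Z j c0 / n j) + Z i c1 / n i * (Z j c1 / n j) +
   Z i c2 / n i * (Z j c2 / n j) =
   (Z i c0 * Z j c0 + Z i c1 * Z j c1 + Z i c2 * Z j c2) / (n i * n j).
  by field; rewrite !gt_eqF.
by rewrite pmulr_lgt0 // invr_gt0 mulr_gt0.
Qed.
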